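(* The Hoffman–Singleton graph $HS$ satisfies $\alpha_{\mathrm{od}}(HS)=15$ and $\chi_{\mathrm{so}}(HS)\le20$. Moreover, $HS$ has no odd independent set with exactly $k$ vertices for any $k$ with $11\le k\le14$.
   Context: The Hoffman–Singleton graph is the (unique) $7$-regular graph on $50$ vertices with diameter $2$ and girth $5$. An odd independent set in $G=(V,E)$ is an independent set $S$ such that every $v\in V\setminus S$ has either no neighbor or an odd number of neighbors in $S$; $\alpha_{\mathrm{od}}(G)$ is its maximum size. A strong odd coloring is a proper coloring such that for each vertex $v$ every color on $N(v)$ occurs an odd number of times on $N(v)$; $\chi_{\mathrm{so}}(G)$ is the minimum number of colors. *)

(* Defs.v *)
From mathcomp Require Import all_boot.
Set Implicit Arguments. Unset Strict Implicit. Unset Printing Implicit Defensive.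

Section GraphNotions.
Variables (T : finType) (e : rel T).

Definition nbhd (v : T) : {set T} := [set u | e v u].

Definition independent (S : {set T}) : bool :=
  [forall x in S, forall y in S, ~~ e x y].

Definition odd_independent (S : {set T}) : bool :=
  independent S &&
  [forall v in ~: S, (#|nbhd v :&: S| == 0) || odd #|nbhd v :&: S|].

Definition alpha_od : nat := \max_(S : {set T} | odd_independent S) #|S|.

Definition proper_coloring k (f : T -> 'I_k) : bool :=
  [forall u, forall v, e u v ==> (f u != f v)].

Definition strong_odd_coloring k (f : T -> 'I_k) : bool :=
  proper_coloring f &&
  [forall v, forall c : 'I_k,
     let n := #|[set u in nbhd v | f u == c]| in (n == 0) || odd n].

End GraphNotions.

(* ---------- The Hoffman-Singleton graph (Robertson's construction) ----------
   50 vertices: pentagons P_h (h in Z5) with vertices (false,h,j),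
   pentagrams Q_i (i in Z5) with vertices (true,i,j), j in Z5. *)
Definition HSV := (bool * 'I_5 * 'I_5)%type.

Definition cyc_step (d : nat) (j j' : 'I_5) : bool :=
  (val j' == (j + d) %% 5) || (val j == (j' + d) %% 5).

Definition hs_adj (x y : HSV) : bool :=
  match x, y with
  | (false, h, j), (false, h', j') => (h == h') && cyc_step 1 j j'
  | (true, i, j), (true, i', j') => (i == i') && cyc_step 2 j j'
  | (false, h, j), (true, i, j') => val j' == (h * i + j) %% 5
  | (true, i, j'), (false, h, j) => val j' == (h * i + j) %% 5
  end.

Definition Z5l : seq 'I_5 :=
  [:: @Ordinal 5 0 isT; @Ordinal 5 1 isT; @Ordinal 5 2 isT;
      @Ordinal 5 3 isT; @Ordinal 5 4 isT].
Definition HSl : seq HSV :=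
  [seq (bh, j) | bh <- [seq (b, h) | b <- [:: false; true], h <- Z5l],
                 j <- Z5l].
Lemma HSl_uniq : uniq HSl && (size HSl == 50). Proof. by vm_compute. Qed.
Lemma HSV_card : #|{: HSV}| = 50.
Proof. by rewrite !card_prod !card_ord card_bool. Qed.
Lemma hs_sym : all (fun x => all (fun y => hs_adj x y == hs_adj y x) HSl) HSl.
Proof. by vm_compute. Qed.
Lemma hs_irrefl : all (fun x => ~~ hs_adj x x) HSl. Proof. by vm_compute. Qed.
Lemma hs_regular : all (fun x => count (hs_adj x) HSl == 7) HSl.
Proof. by vm_compute. Qed.
(* adjacent vertices: 0 common neighbours (girth 5); distinct non-adjacent
   vertices: exactly 1 common neighbour (diameter 2, no 4-cycles) *)
Lemma hs_srg : all (fun x => all (fun y => (x != y) ==>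
   (count (fun z => hs_adj x z && hs_adj y z) HSl == (if hs_adj x y then 0 else 1))) HSl) HSl.
Proof. by vm_compute. Qed.

(* Main.v *)
Require Import Defs.
From mathcomp Require Import all_boot zify.

Lemma HSl_uniq' : uniq HSl. Proof. by case/andP: HSl_uniq. Qed.
Lemma mem_HSl (x : HSV) : x \in HSl.
Proof.
have H1 : #|[pred y in HSl]| = #|{: HSV}|.
  rewrite HSV_card; move/card_uniqP: HSl_uniq' => ->.
  by case/andP: HSl_uniq => _ /eqP.
have := subset_cardP H1 (subset_predT _).
by move=> H; have := H x; rewrite !inE.
Qed.
Lemma card_HSl (P : pred HSV) : #|P| = count P HSl.
Proof.
rewrite cardE /enum_mem size_filter; have Hp : perm_eq (Finite.enum HSV) HSl.
  rewrite -enumT.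
  apply: uniq_perm; [exact: enum_uniq | exact: HSl_uniq' |].
  by move=> x; rewrite mem_HSl mem_enum.
by move/permP: Hp => ->.
Qed.
Lemma all_HSl (P : pred HSV) : all P HSl -> forall x, P x.
Proof. by move/allP=> H x; apply: H; exact: mem_HSl. Qed.
Arguments all_HSl {P}.

Lemma card_setP (P : pred HSV) : #|[set x | P x]| = count P HSl.
Proof. by rewrite cardsE card_HSl. Qed.

Lemma adj_sym x y : hs_adj x y = hs_adj y x.
Proof.
have H : all (fun y => hs_adj x y == hs_adj y x) HSl := all_HSl hs_sym x.
exact/eqP/(all_HSl H y).
Qed.

Lemma deg7 x : #|nbhd hs_adj x| = 7.
Proof. rewrite /nbhd card_setP; exact/eqP/(all_HSl hs_regular x). Qed.

Lemma common x y : x != y ->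
  #|nbhd hs_adj x :&: nbhd hs_adj y| = if hs_adj x y then 0 else 1.
Proof.
move=> xy.
have H : all (fun y => (x != y) ==>
   (count (fun z => hs_adj x z && hs_adj y z) HSl == (if hs_adj x y then 0 else 1))) HSl := all_HSl hs_srg x.
have := all_HSl H y; rewrite xy implyTb => /eqP <-.
rewrite -card_setP; apply: eq_card => z; by rewrite !inE.
Qed.

Definition odd_indep_l (p : pred HSV) : bool :=
  all (fun x => p x ==> all (fun y => p y ==> ~~ hs_adj x y) HSl) HSl &&
  all (fun v => ~~ p v ==> (let c := count (fun u => hs_adj v u && p u) HSl in (c == 0) || odd c)) HSl.

Lemma odd_indep_of_l p : odd_indep_l p -> odd_independent hs_adj [set x | p x].
Proof.
case/andP=> H1 H2; apply/andP; split.
  apply/forallP=> x; apply/implyP; rewrite inE => px.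
  apply/forallP=> y; apply/implyP; rewrite inE => py.
  by have := all_HSl H1 x; rewrite px => /all_HSl /(_ y); rewrite py.
apply/forallP=> v; apply/implyP; rewrite !inE => pv.
have := all_HSl H2 v; rewrite pv /=.
have -> : #|nbhd hs_adj v :&: [set x | p x]| = count (fun u => hs_adj v u && p u) HSl.
  rewrite -card_setP; apply: eq_card => z; by rewrite !inE.
by [].
Qed.

Definition S15l : seq nat := [:: 4; 9; 12; 18; 22; 25; 26; 32; 33; 37; 38; 40; 41; 46; 47].
Definition inS15 (x : HSV) : bool := index x HSl \in S15l.
Lemma S15_chk : odd_indep_l inS15 && (count inS15 HSl == 15).
Proof. Time vm_compute. reflexivity. Qed.

Definition coltab : seq nat := [:: 0; 1; 2; 3; 4; 3; 5; 6; 7; 0; 8; 0; 9; 3; 10; 11; 0; 3; 1; 12; 1; 3; 1; 3; 0; 2; 13; 0; 0; 2; 1; 0; 0; 2; 14; 3; 2; 15; 0; 0; 1; 2; 16; 0; 0; 17; 0; 0; 2; 1].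
Definition colN (x : HSV) : nat := nth 0 coltab (index x HSl).
Definition col (x : HSV) : 'I_20 := inord (colN x).
Definition col_chk : bool :=
  all (fun x => colN x < 20) HSl &&
  all (fun x => all (fun y => hs_adj x y ==> (colN x != colN y)) HSl) HSl &&
  all (fun v => all (fun c => let n := count (fun u => hs_adj v u && (colN u == c)) HSl in (n == 0) || odd n) (iota 0 20)) HSl.
Lemma col_chk_ok : col_chk. Proof. Time vm_compute. reflexivity. Qed.

Lemma colV x : val (col x) = colN x.
Proof.
case/andP: col_chk_ok => /andP [H _] _.
apply: inordK; exact: (all_HSl H x).
Qed.
Lemma colE x (c : 'I_20) : (col x == c) = (colN x == c).
Proof. by rewrite -val_eqE colV. Qed.

Lemma col_ok : strong_odd_coloring hs_adj col.
Proof.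
case/andP: col_chk_ok => /andP [_ H1] H2; apply/andP; split.
  apply/forallP=> u; apply/forallP=> v; apply/implyP=> uv.
  have := all_HSl H1 u => /all_HSl /(_ v); rewrite uv /= => H.
  by rewrite colE colV.
apply/forallP=> v; apply/forallP=> c.
have := all_HSl H2 v => /allP /(_ (val c)); rewrite mem_iota /= ltn_ord => /(_ isT).
have -> : #|[set u in nbhd hs_adj v | col u == c]| = count (fun u => hs_adj v u && (colN u == c)) HSl.
  rewrite -card_setP; apply: eq_card => z; by rewrite !inE colE.
by [].
Qed.

Lemma cardE_sum (A : {pred HSV}) : #|A| = \sum_u (u \in A).
Proof. rewrite -sum1_card big_mkcond; apply: eq_bigr => u _; by case: (u \in A). Qed.

Section Count.
Variable S : {set HSV}.
Hypothesis hind : independent hs_adj S.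

Lemma indep_uv u w : u \in S -> w \in S -> hs_adj u w = false.
Proof.
move=> uS wS; move/forallP: hind => /(_ u); rewrite uS implyTb => /forallP /(_ w).
by rewrite wS implyTb => /negbTE.
Qed.

Definition d v := #|nbhd hs_adj v :&: S|.

Lemma dE v : d v = \sum_u (hs_adj v u && (u \in S)).
Proof. rewrite /d cardE_sum; apply: eq_bigr => u _; by rewrite !inE. Qed.

Lemma d_inS v : v \in S -> d v = 0.
Proof.
move=> vS; rewrite dE big1 // => u _.
by case uS: (u \in S); rewrite ?andbF // indep_uv.
Qed.

Lemma d_le7 v : d v <= 7.
Proof. by rewrite -(deg7 v) /d; apply: subset_leq_card; apply: subsetIl. Qed.

Lemma sum_d : \sum_v d v = 7 * #|S|.
Proof.
under eq_bigr => v _ do rewrite dE.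
rewrite exchange_big /= cardE_sum big_distrr /=; apply: eq_bigr => u _.
case uS: (u \in S); last by rewrite big1 // => v _; rewrite andbF.
rewrite muln1 -(deg7 u) cardE_sum; apply: eq_bigr => v _.
by rewrite andbT inE adj_sym.
Qed.

Lemma sum_pred1 u : \sum_(w : HSV) (w == u : nat) = 1.
Proof. by rewrite (bigD1 u) //= eqxx big1 // => w /negbTE ->. Qed.

Lemma sum_d2 : \sum_v d v * d v = #|S| * (#|S| + 6).
Proof.
under eq_bigr => v _ do rewrite dE big_distrl /=.
under eq_bigr => v _ do under eq_bigr => u _ do rewrite big_distrr /=.
rewrite exchange_big /=.
under eq_bigr => u _ do rewrite exchange_big /=.
rewrite cardE_sum big_distrl /=; apply: eq_bigr => u _.
case uS: (u \in S); last first.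
  by rewrite mul0n big1 // => w _; rewrite big1 // => v _; rewrite andbF.
rewrite mul1n.
have -> : \sum_w \sum_v ((hs_adj v u && true) * (hs_adj v w && (w \in S)))
        = \sum_w ((w \in S : nat) + 6 * (w == u)).
  apply: eq_bigr => w _.
  case wS: (w \in S); last first.
    rewrite big1 => [|v _]; last by rewrite andbF muln0.
    by case: eqP => // wu; rewrite wu uS in wS.
  have -> : \sum_v ((hs_adj v u && true) * (hs_adj v w && true)) = #|nbhd hs_adj u :&: nbhd hs_adj w|.
    rewrite cardE_sum; apply: eq_bigr => v _; by rewrite !andbT mulnb !inE !(adj_sym v).
  case: eqP => [->|wu].
    by rewrite setIid deg7.
  rewrite common; last by apply/eqP => uw; apply: wu.
  by rewrite indep_uv.
by rewrite big_split /= -big_distrr /= sum_pred1 -cardE_sum.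
Qed.

Lemma arith n : n <= 7 -> (n == 0) || odd n -> (4 * n <= n * n + 3) && (8 * n <= n * n + 15).
Proof. by case: n => [|[|[|[|[|[|[|[|n]]]]]]]]. Qed.

Hypothesis hodd : [forall v in ~: S, (#|nbhd hs_adj v :&: S| == 0) || odd #|nbhd hs_adj v :&: S|].

Lemma pointwise v :
  [&& 4 * d v + 3 * (v \in S) <= d v * d v + 3,
      8 * d v + 15 * (v \in S) <= d v * d v + 15 &
      d v + 7 * (v \in S) <= 7].
Proof.
case vS: (v \in S); first by rewrite d_inS.
move/forallP: hodd => /(_ v); rewrite inE vS implyTb => H.
have /andP[h1 h2] := arith (d v) (d_le7 v) H.
by rewrite !muln0 !addn0 h1 h2 d_le7.
Qed.

Lemma card_bound :
  [&& 31 * #|S| <= #|S| * (#|S| + 6) + 150, 71 * #|S| <= #|S| * (#|S| + 6) + 750 & 14 * #|S| <= 350].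
Proof.
have Hsum c : \sum_(v : HSV) c = 50 * c by rewrite sum_nat_const HSV_card.
have HS c : \sum_(v : HSV) c * (v \in S) = c * #|S| by rewrite -big_distrr /= -cardE_sum.
have E1 a b : \sum_v (a * d v + b * (v \in S)) = a * (7 * #|S|) + b * #|S|.
  by rewrite big_split /= -big_distrr /= sum_d HS.
have E1' : \sum_v (d v + 7 * (v \in S)) = 7 * #|S| + 7 * #|S|.
  by rewrite big_split /= sum_d HS.
have E2 c : \sum_v (d v * d v + c) = #|S| * (#|S| + 6) + 50 * c.
  by rewrite big_split /= sum_d2 Hsum.
have P1 : \sum_v (4 * d v + 3 * (v \in S)) <= \sum_v (d v * d v + 3).
  by apply: leq_sum => v _; case/and3P: (pointwise v).
have P2 : \sum_v (8 * d v + 15 * (v \in S)) <= \sum_v (d v * d v + 15).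
  by apply: leq_sum => v _; case/and3P: (pointwise v).
have P3 : \sum_v (d v + 7 * (v \in S)) <= \sum_(v : HSV) 7.
  by apply: leq_sum => v _; case/and3P: (pointwise v).
rewrite E2 in P1; rewrite E2 in P2; rewrite E1' Hsum in P3.
rewrite E1 in P1; rewrite E1 in P2.
move: P1 P2 P3; generalize (#|S| * (#|S| + 6)) => t; generalize #|S| => s.
move=> P1 P2 P3. apply/and3P; split; lia.
Qed.

End Count.

Lemma bound (S : {set HSV}) : odd_independent hs_adj S -> (#|S| <= 15) && ~~ (11 <= #|S| <= 14).
Proof.
case/andP=> hi ho; have /and3P [h1 h2 h3] := card_bound S hi ho.
have key : all (fun s => [&& 31*s <= s*(s+6)+150, 71*s <= s*(s+6)+750 & 14*s <= 350]
   ==> (s <= 15) && ~~ (11 <= s <= 14)) (iota 0 26) by [].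
have hs : #|S| \in iota 0 26 by rewrite mem_iota add0n; lia.
by have := allP key _ hs; rewrite h1 h2 h3.
Qed.

Theorem proposition9 :
  [/\ alpha_od hs_adj = 15,
      (exists f : HSV -> 'I_20, strong_odd_coloring hs_adj f)
    & forall S : {set HSV}, odd_independent hs_adj S ->
        ~~ (11 <= #|S| <= 14)].
Proof.
split.
- apply/eqP; rewrite eqn_leq; apply/andP; split.
    by apply/bigmax_leqP => S hS; case/andP: (bound S hS).
  case/andP: S15_chk => H1 H2.
  have H15 := odd_indep_of_l _ H1.
  have C : #|[set x | inS15 x]| = 15 by rewrite card_setP; exact/eqP.
  rewrite -{1}C; exact: (@leq_bigmax_cond _ _ (fun S : {set HSV} => #|S|) _ H15).
- by exists col; exact: col_ok.
- by move=> S hS; case/andP: (bound S hS).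
Qed.
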